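(* Suppose that for every $m'\in\mathbb{N}$ there are sequences $(Z_{j,m'})_{j}$ of $\mathcal{C}^\infty$ maps $\mathbb{T}^d\to Gl(n,\mathbb{C})$ and $(F_{j,m'})_j$ of $\mathcal{C}^\infty$ maps $\mathbb{T}^d\to gl(n,\mathbb{C})$ such that $\|Z_{j,m'}^{\pm1}\|^{m'}_{\mathcal{C}^{m'}}\|F_{j,m'}\|_{\mathcal{C}^{m'}}\to0$ as $j\to\infty$. Then there exist sequences $(\tilde Z_j)$ and $(\tilde F_j)$, extracted from these with the same indices (i.e. $\tilde Z_j=Z_{a_j,b_j}$ and $\tilde F_j=F_{a_j,b_j}$ for some indices $(a_j,b_j)$), such that for all $m,r\in\mathbb{N}$, $\|\tilde Z_j^{\pm1}\|^m_{\mathcal{C}^r}\|\tilde F_j\|_{\mathcal{C}^r}\to0$ as $j\to\infty$.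
   Context: $\mathbb{T}^d=\mathbb{R}^d/\mathbb{Z}^d$; $\|\cdot\|$ operator norm, $\|A\|_{\mathcal{C}^0}=\sup_\theta\|A(\theta)\|$, $\|A\|_{\mathcal{C}^r}=\max_{|\alpha|\le r}\|\partial^\alpha A\|_{\mathcal{C}^0}$; conditions with $\pm1$ are required for both the maps and their pointwise inverses. *)

(* Defs.v *)
From HB Require Import structures.
From mathcomp Require Import all_boot all_order all_algebra.
From mathcomp Require Import all_classical all_reals all_analysis.
From mathcomp Require Import complex.
Set Implicit Arguments. Unset Strict Implicit. Unset Printing Implicit Defensive.
Import Order.TTheory GRing.Theory Num.Theory.
Import numFieldNormedType.Exports.
Local Open Scope classical_set_scope.
Local Open Scope ring_scope.

Section TorusMaps.
Variables (R : realType) (d n : nat).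

(* A map T^d -> M_n(C) is represented as a Z^d-periodic map R^d -> M_n(C);
   points of R^d are row vectors 'rV[R]_d. *)
Definition mxfun := 'rV[R]_d -> 'M[R[i]]_n.

Definition evec (k : 'I_d) : 'rV[R]_d := delta_mx 0 k.

Definition periodic (A : mxfun) := forall (k : 'I_d) x, A (x + evec k) = A x.

Definition dpart1 (k : 'I_d) (A : mxfun) : mxfun := fun x =>
  \matrix_(i, j)
    Complex ('D_(evec k) (fun y => complex.Re (A y i j)) x)
            ('D_(evec k) (fun y => complex.Im (A y i j)) x).

(* iterated partial derivative along the list of directions s
   (the head of s is applied last) *)
Fixpoint dpart (s : seq 'I_d) (A : mxfun) : mxfun :=
  match s with
  | [::] => A
  | k :: s' => dpart1 k (dpart s' A)
  end.

Definition smooth (A : mxfun) :=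
  forall (s : seq 'I_d) (i j : 'I_n),
    continuous (fun y => complex.Re (dpart s A y i j)) /\
    continuous (fun y => complex.Im (dpart s A y i j)) /\
    forall (k : 'I_d) x,
      derivable (fun y => complex.Re (dpart s A y i j)) x (evec k) /\
      derivable (fun y => complex.Im (dpart s A y i j)) x (evec k).

Definition torus_smooth (A : mxfun) := periodic A /\ smooth A.

Definition torus_smooth_GL (A : mxfun) :=
  torus_smooth A /\ forall x, A x \in unitmx.

Definition mxinvf (A : mxfun) : mxfun := fun x => invmx (A x).

End TorusMaps.

Section Norms.
Variables (R : realType).

Definition cmod (z : R[i]) : R := Num.sqrt (complex.Re z ^+ 2 + complex.Im z ^+ 2).

Definition vnorm n (v : 'cV[R[i]]_n) : R := Num.sqrt (\sum_i cmod (v i 0) ^+ 2).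

Definition opnorm n (M : 'M[R[i]]_n) : R :=
  sup [set vnorm (M *m v) | v in [set v : 'cV[R[i]]_n | vnorm v <= 1]].

Definition C0norm d n (A : mxfun R d n) : R := sup [set opnorm (A x) | x in setT].

(* ||A||_{C^r} = max_{|alpha| <= r} ||d^alpha A||_{C^0}; multi-indices of order
   <= r are represented by lists of directions of length <= r *)
Definition Crnorm d n (r : nat) (A : mxfun R d n) : R :=
  sup [set C0norm (dpart s A) | s in [set s : seq 'I_d | (size s <= r)%N]].

End Norms.

(* Main.v *)
Require Import Defs.
From HB Require Import structures.
From mathcomp Require Import all_boot all_order all_algebra.
From mathcomp Require Import all_classical all_reals all_analysis.
From mathcomp Require Import complex.
From mathcomp Require Import lra.
Import Order.TTheory GRing.Theory Num.Theory.
Import numFieldNormedType.Exports.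
Local Open Scope classical_set_scope.
Local Open Scope ring_scope.


Section Cmod.
Variable R : realType.
Implicit Types x y z : R[i].

Lemma cmodE z : (cmod z)%:C%C = `|z|.
Proof. by case: z. Qed.

Lemma cmod_ge0 z : 0 <= cmod z.
Proof. exact: sqrtr_ge0. Qed.

Lemma cmodM x y : cmod (x * y) = cmod x * cmod y.
Proof. by apply: (@complexI R); rewrite rmorphM /= !cmodE normrM. Qed.

Lemma cmodD x y : cmod (x + y) <= cmod x + cmod y.
Proof. by rewrite -(@lecR R) rmorphD /= !cmodE ler_normD. Qed.

Lemma cmod_eq0 z : cmod z = 0 -> z = 0.
Proof. by move=> h; apply/eqP; rewrite -normr_eq0 -cmodE h. Qed.

Lemma cmod0 : cmod (0 : R[i]) = 0.
Proof. by apply: (@complexI R); rewrite cmodE normr0. Qed.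

Lemma cmod_real (c : R) : 0 <= c -> cmod (c%:C)%C = c.
Proof. by move=> c0; apply: (@complexI R); rewrite cmodE ger0_norm // ler0c. Qed.

Lemma cmod_le z : cmod z <= `|complex.Re z| + `|complex.Im z|.
Proof.
case: z => a b; rewrite /cmod /=.
rewrite -[X in _ <= X]ger0_norm ?addr_ge0 // -sqrtr_sqr.
apply: ler_wsqrtr.
rewrite sqrrD !real_normK ?num_real // -addrA lerD2l lerDr.
by rewrite mulrn_wge0 // mulr_ge0.
Qed.

Lemma cmod_sum (I : finType) (f : I -> R[i]) : cmod (\sum_i f i) <= \sum_i cmod (f i).
Proof.
elim/big_rec2: _ => [|i y x _ h]; first by rewrite cmod0.
by rewrite (le_trans (cmodD _ _)) // lerD2l.
Qed.

Lemma sup_ge0 (E : set R) : (forall r, E r -> 0 <= r) -> 0 <= sup E.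
Proof.
move=> h; case: (pselect (has_sup E)) => [[[e Ee] ub]|hs]; last by rewrite sup_out.
by apply: le_trans (h e Ee) _; apply: ub_le_sup.
Qed.

Lemma vnorm_ge0 n (v : 'cV[R[i]]_n) : 0 <= vnorm v.
Proof. exact: sqrtr_ge0. Qed.

Lemma cmod_le_vnorm n (v : 'cV[R[i]]_n) i : cmod (v i 0) <= vnorm v.
Proof.
rewrite /vnorm -[X in X <= _]ger0_norm ?cmod_ge0 // -sqrtr_sqr.
apply: ler_wsqrtr; rewrite (bigD1 i) //= lerDl.
by apply: sumr_ge0 => j _; rewrite sqr_ge0.
Qed.

Lemma vnorm0 n : vnorm (0 : 'cV[R[i]]_n) = 0.
Proof.
rewrite /vnorm big1 ?sqrtr0 // => i _.
by rewrite mxE cmod0 expr0n.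
Qed.

Lemma vnorm_eq0 n (v : 'cV[R[i]]_n) : vnorm v = 0 -> v = 0.
Proof.
move=> h; apply/matrixP => i j; rewrite (ord1 j) mxE.
apply: cmod_eq0; apply/eqP; rewrite eq_le cmod_ge0 andbT -h.
exact: cmod_le_vnorm.
Qed.

Lemma vnormZ n (c : R) (v : 'cV[R[i]]_n) : 0 <= c ->
  vnorm ((c%:C)%C *: v) = c * vnorm v.
Proof.
move=> c0; rewrite /vnorm.
under eq_bigr => i _ do rewrite mxE cmodM cmod_real // exprMn.
by rewrite -mulr_sumr sqrtrM ?sqr_ge0 // sqrtr_sqr ger0_norm.
Qed.

Lemma vnorm_bound n (M : 'M[R[i]]_n) (K : R) (v : 'cV[R[i]]_n) :
  0 <= K -> (forall i j, cmod (M i j) <= K) -> vnorm v <= 1 ->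
  vnorm (M *m v) <= Num.sqrt (n%:R * (n%:R * K) ^+ 2).
Proof.
move=> K0 hK hv; rewrite /vnorm; apply: ler_wsqrtr.
have -> : n%:R * (n%:R * K) ^+ 2 = \sum_(i < n) (n%:R * K) ^+ 2.
  by rewrite sumr_const card_ord mulr_natl.
apply: ler_sum => i _; rewrite !expr2; apply: ler_pM; rewrite ?cmod_ge0 //;
  rewrite mxE (le_trans (cmod_sum _ _)) //;
  have -> : n%:R * K = \sum_(j < n) K by rewrite sumr_const card_ord mulr_natl.
all: apply: ler_sum => j _; rewrite cmodM -[X in _ <= X]mulr1.
all: by apply: ler_pM; rewrite ?cmod_ge0 ?hK // (le_trans (cmod_le_vnorm _ _ _)).
Qed.

Lemma opnorm_has_ub n (M : 'M[R[i]]_n) :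
  has_ubound [set vnorm (M *m v) | v in [set v : 'cV[R[i]]_n | vnorm v <= 1]].
Proof.
pose K := \sum_i \sum_j cmod (M i j).
have K0 : 0 <= K by do 2!(apply: sumr_ge0 => ? _); exact: cmod_ge0.
exists (Num.sqrt (n%:R * (n%:R * K) ^+ 2)) => _ [v hv <-].
apply: vnorm_bound => // i j.
rewrite /K (bigD1 i) //= (bigD1 j) //= -addrA lerDl addr_ge0 //.
  by apply: sumr_ge0 => ? _; exact: cmod_ge0.
by do 2!(apply: sumr_ge0 => ? _); exact: cmod_ge0.
Qed.

Lemma opnorm_ub n (M : 'M[R[i]]_n) v : vnorm v <= 1 -> vnorm (M *m v) <= opnorm M.
Proof. by move=> hv; apply: ub_le_sup; [exact: opnorm_has_ub | exists v]. Qed.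

Lemma opnorm_ge0 n (M : 'M[R[i]]_n) : 0 <= opnorm M.
Proof. by apply: sup_ge0 => _ [v _ <-]; exact: vnorm_ge0. Qed.

Lemma opnorm_mul n (M : 'M[R[i]]_n) u : vnorm (M *m u) <= opnorm M * vnorm u.
Proof.
case: (pselect (vnorm u = 0)) => [h|/eqP hpos].
  by rewrite h mulr0 (vnorm_eq0 _ _ h) mulmx0 vnorm0.
have t0 : 0 < vnorm u by rewrite lt_def hpos vnorm_ge0.
set t := vnorm u in t0 hpos *.
have -> : u = (t%:C)%C *: ((t^-1)%:C%C *: u).
  by rewrite scalerA -rmorphM /= mulfV // scale1r.
rewrite -scalemxAr (vnormZ _ _ _ (ltW t0)) mulrC ler_pM2r //.
have ti : 0 <= t^-1 by rewrite invr_ge0 ltW.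
apply: opnorm_ub; rewrite (vnormZ _ _ _ ti) -/t mulVf //.
Qed.

Lemma opnorm_inv n (M : 'M[R[i]]_n.+1) : M \in unitmx ->
  1 <= opnorm M * opnorm (invmx M).
Proof.
move=> Mu; pose e : 'cV[R[i]]_n.+1 := delta_mx 0 0.
have ve : vnorm e = 1.
  rewrite /vnorm (bigD1 0) //= big1 ?addr0.
    by rewrite mxE eqxx /= cmod_real ?ler01 // expr1n sqrtr1.
  by move=> i /negbTE hi; rewrite mxE hi /= cmod0 expr0n.
have : vnorm (M *m (invmx M *m e)) <= opnorm M * vnorm (invmx M *m e).
  exact: opnorm_mul.
rewrite mulKVmx // ve => h; apply: (le_trans h); apply: ler_wpM2l.
  exact: opnorm_ge0.
by apply: opnorm_ub; rewrite ve.
Qed.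
End Cmod.


Section Bnd.
Variables (R : realType) (d : nat).

Lemma per_nat (g : 'rV[R]_d -> R) : (forall k x, g (x + evec R k) = g x) ->
  forall k m x, g (x + evec R k *+ m) = g x.
Proof.
move=> hg k; elim=> [|m ih] x; first by rewrite mulr0n addr0.
by rewrite mulrSr addrA hg ih.
Qed.

Lemma per_int (g : 'rV[R]_d -> R) : (forall k x, g (x + evec R k) = g x) ->
  forall k (z : int) x, g (x + evec R k *~ z) = g x.
Proof.
move=> hg k [m|m] x; first by rewrite -pmulrn (per_nat g hg).
rewrite NegzE mulrNz -pmulrn.
by rewrite -[in RHS](subrK (evec R k *+ m.+1) x) (per_nat g hg).
Qed.

Lemma per_sum (g : 'rV[R]_d -> R) : (forall k x, g (x + evec R k) = g x) ->
  forall (c : 'I_d -> int) (s : seq 'I_d) x,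
  g (x + \sum_(k <- s) evec R k *~ c k) = g x.
Proof.
move=> hg c; elim=> [|k s ih] x; first by rewrite big_nil addr0.
by rewrite big_cons addrA addrAC (per_int g hg) ih.
Qed.

Lemma bnd_per (g : 'rV[R]_d -> R) : continuous g ->
  (forall k x, g (x + evec R k) = g x) -> exists M, forall x, `|g x| <= M.
Proof.
move=> gc hg.
pose K := [set v : 'rV[R]_d | forall i, [set` `[(0:R), 1]] (v ord0 i)].
have Kc : compact K.
  exact: (@rV_compact R d (fun=> [set` `[(0:R), 1]]) (fun=> @segment_compact R 0 1)).
have gKc : compact (g @` K).
  by apply: continuous_compact => //; exact: continuous_subspaceT.
have := compact_bounded gKc; case=> M [_ HM].
exists (M + 1) => x.
pose c := fun k : 'I_d => Num.floor (x ord0 k).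
pose y := x - \sum_(k < d) evec R k *~ c k.
have -> : g x = g y.
  by rewrite /y -(per_sum g hg c (index_enum _) (x - _)) subrK.
have Ky : K y.
  move=> i; rewrite /y !mxE summxE.
  rewrite (bigD1 i) //= big1 ?addr0; last first.
    by move=> j /negbTE hj; rewrite -scaler_int !mxE [i == j]eq_sym hj andbF mulr0.
  rewrite -scaler_int !mxE !eqxx /= mulr1 in_itv /= subr_ge0 real_floor_le ?num_real //=.
  have h := real_floorD1_gt (num_real (x ord0 i)); rewrite intrD /= in h.
  rewrite -/(c i) in h; lra.
by apply: (HM (M + 1)); [rewrite ltrDl | exists y].
Qed.
End Bnd.


Section CC.
Variables (R : realType) (d : nat).
Implicit Types (f g : 'rV[R]_d -> R).

Lemma rc_add f g : continuous f -> continuous g -> continuous (fun x => f x + g x).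
Proof. move=> hf hg x. exact: (@continuousD R R^o _ f g x (hf x) (hg x)). Qed.
Lemma rc_mul f g : continuous f -> continuous g -> continuous (fun x => f x * g x).
Proof. move=> hf hg x. exact: (@continuousM R _ f g x (hf x) (hg x)). Qed.
Lemma rc_opp f : continuous f -> continuous (fun x => - f x).
Proof. move=> hf x. exact: (@continuousN R R^o _ f x (hf x)). Qed.
Lemma rc_inv f : (forall x, f x != 0) -> continuous f -> continuous (fun x => (f x)^-1).
Proof. move=> h0 hf x. exact: (@continuousV R _ f x (h0 x) (hf x)). Qed.
Lemma rc_cst (c : R) : continuous (fun _ : 'rV[R]_d => c).
Proof. by move=> x; apply: cst_continuous. Qed.

Definition cc (F : 'rV[R]_d -> R[i]) :=
  continuous (fun x => complex.Re (F x)) /\ continuous (fun x => complex.Im (F x)).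

Lemma cc_cst c : cc (fun _ => c).
Proof. by split; apply: rc_cst. Qed.

Lemma cc_add F G : cc F -> cc G -> cc (fun x => F x + G x).
Proof.
move=> [h1 h2] [h3 h4]; split.
  have -> : (fun x => complex.Re (F x + G x)) = (fun x => complex.Re (F x) + complex.Re (G x)).
    by apply: funext => x; case: (F x) => ? ?; case: (G x).
  exact: rc_add.
have -> : (fun x => complex.Im (F x + G x)) = (fun x => complex.Im (F x) + complex.Im (G x)).
  by apply: funext => x; case: (F x) => ? ?; case: (G x).
exact: rc_add.
Qed.

Lemma cc_mul F G : cc F -> cc G -> cc (fun x => F x * G x).
Proof.
move=> [h1 h2] [h3 h4]; split.
  have -> : (fun x => complex.Re (F x * G x)) = (fun x =>
     complex.Re (F x) * complex.Re (G x) + - (complex.Im (F x) * complex.Im (G x))).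
    by apply: funext => x; case: (F x) => ? ?; case: (G x).
  by apply: rc_add; [|apply: rc_opp]; apply: rc_mul.
have -> : (fun x => complex.Im (F x * G x)) = (fun x =>
     complex.Re (F x) * complex.Im (G x) + complex.Im (F x) * complex.Re (G x)).
  by apply: funext => x; case: (F x) => ? ?; case: (G x).
by apply: rc_add; apply: rc_mul.
Qed.

Lemma cc_inv F : (forall x, F x != 0) -> cc F -> cc (fun x => (F x)^-1).
Proof.
move=> h0 [h1 h2].
have hn : forall x, complex.Re (F x) ^+ 2 + complex.Im (F x) ^+ 2 != 0.
  move=> x; apply/negP => /eqP h; move/negP: (h0 x); apply.
  have := h; case: (F x) => a b /= hab.
  have ha : a ^+ 2 = 0 by apply/eqP; rewrite eq_le sqr_ge0 andbT -hab lerDl sqr_ge0.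
  have hb : b ^+ 2 = 0 by apply/eqP; rewrite eq_le sqr_ge0 andbT -hab lerDr sqr_ge0.
  by move/eqP: ha; rewrite sqrf_eq0 => /eqP ->; move/eqP: hb; rewrite sqrf_eq0 => /eqP ->.
have hc : continuous (fun x => (complex.Re (F x) ^+ 2 + complex.Im (F x) ^+ 2)^-1).
  by apply: rc_inv => //; apply: rc_add; rewrite /GRing.exp /=; apply: rc_mul.
split.
  have -> : (fun x => complex.Re ((F x)^-1)) = (fun x =>
     complex.Re (F x) * (complex.Re (F x) ^+ 2 + complex.Im (F x) ^+ 2)^-1).
    by apply: funext => x; case: (F x) => ? ?.
  exact: rc_mul.
have -> : (fun x => complex.Im ((F x)^-1)) = (fun x =>
     - (complex.Im (F x) * (complex.Re (F x) ^+ 2 + complex.Im (F x) ^+ 2)^-1)).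
  by apply: funext => x; case: (F x) => ? ?.
by apply: rc_opp; exact: rc_mul.
Qed.

Lemma cc_sum (I : Type) (s : seq I) (F : I -> 'rV[R]_d -> R[i]) :
  (forall i, cc (F i)) -> cc (fun x => \sum_(i <- s) F i x).
Proof.
move=> h; elim: s => [|a s ih].
  by under [fun x => _]funext => x do rewrite big_nil; exact: cc_cst.
by under [fun x => _]funext => x do rewrite big_cons; exact: cc_add.
Qed.

Lemma cc_prod (I : Type) (s : seq I) (F : I -> 'rV[R]_d -> R[i]) :
  (forall i, cc (F i)) -> cc (fun x => \prod_(i <- s) F i x).
Proof.
move=> h; elim: s => [|a s ih].
  by under [fun x => _]funext => x do rewrite big_nil; exact: cc_cst.
by under [fun x => _]funext => x do rewrite big_cons; exact: cc_mul.
Qed.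

Lemma cc_det m (M : 'rV[R]_d -> 'M[R[i]]_m) :
  (forall i j, cc (fun x => M x i j)) -> cc (fun x => \det (M x)).
Proof.
move=> h; rewrite /determinant; apply: cc_sum => s.
by apply: cc_mul; [exact: cc_cst | apply: cc_prod => i; exact: h].
Qed.

Lemma cc_invmx m (M : 'rV[R]_d -> 'M[R[i]]_m) :
  (forall x, M x \in unitmx) ->
  (forall i j, cc (fun x => M x i j)) -> forall i j, cc (fun x => invmx (M x) i j).
Proof.
move=> hu h i j.
have -> : (fun x => invmx (M x) i j) = (fun x => (\det (M x))^-1 *
   ((-1) ^+ (j + i) * \det (row' j (col' i (M x))))).
  by apply: funext => x; rewrite /invmx hu !mxE.
apply: cc_mul; last apply: cc_mul; first apply: cc_inv.
- by move=> x; have := hu x; rewrite unitmxE unitfE.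
- exact: cc_det.
- exact: cc_cst.
by apply: cc_det => a b; under [fun x => _]funext => x do rewrite !mxE; exact: h.
Qed.
End CC.


Arguments cmod_le {R}. Arguments bnd_per {R d}. Arguments cc {R d}.
Arguments cc_invmx {R d m M}. Arguments opnorm_inv {R n}. Arguments opnorm_ge0 {R n}.
Arguments sup_ge0 {R}. Arguments vnorm_bound {R n}. Arguments vnorm0 {R n}.
Arguments opnorm_ub {R n}. Arguments cmod_ge0 {R}.

Section Tor.
Variables (R : realType) (d n : nat).

Lemma opnorm_le (M : 'M[R[i]]_n) K : 0 <= K -> (forall i j, cmod (M i j) <= K) ->
  opnorm M <= Num.sqrt (n%:R * (n%:R * K) ^+ 2).
Proof.
move=> K0 hK; apply: ge_sup.
  by exists (vnorm (M *m 0)), 0 => //; rewrite /= vnorm0 ler01.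
by move=> _ [v hv <-]; apply: vnorm_bound.
Qed.

Lemma entry_bound (A : mxfun R d n) : Defs.periodic (R:=R) A ->
  (forall i j, cc (fun x => A x i j)) ->
  exists K, 0 <= K /\ forall x i j, cmod (A x i j) <= K.
Proof.
move=> hp hc.
have H : forall p : 'I_n * 'I_n, exists M : R, forall x, cmod (A x p.1 p.2) <= M.
  move=> [i j]; have [h1 h2] := hc i j.
  have [M1 HM1] := bnd_per _ h1 (fun k x => congr1 (fun (B : 'M[R[i]]_n) => complex.Re (B i j)) (hp k x)).
  have [M2 HM2] := bnd_per _ h2 (fun k x => congr1 (fun (B : 'M[R[i]]_n) => complex.Im (B i j)) (hp k x)).
  exists (M1 + M2) => x; apply: (le_trans (cmod_le _)); exact: lerD.
have [Mf HM] := choice H.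
exists (\sum_p `|Mf p|); split; first by apply: sumr_ge0 => p _.
move=> x i j; apply: (le_trans (HM (i, j) x)).
rewrite (bigD1 (i, j)) //= (le_trans (ler_norm _)) // lerDl.
by apply: sumr_ge0.
Qed.

Lemma C0_ge (A : mxfun R d n) : Defs.periodic (R:=R) A ->
  (forall i j, cc (fun x => A x i j)) -> forall x, opnorm (A x) <= C0norm A.
Proof.
move=> hp hc x; have [K [K0 HK]] := entry_bound A hp hc.
apply: ub_le_sup; last by exists x.
exists (Num.sqrt (n%:R * (n%:R * K) ^+ 2)) => _ [y _ <-].
exact: opnorm_le.
Qed.

Lemma C0_ge0 (A : mxfun R d n) : 0 <= C0norm A.
Proof. by apply: sup_ge0 => _ [y _ <-]; exact: opnorm_ge0. Qed.

End Tor.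
Arguments C0_ge {R d n A}. Arguments C0_ge0 {R d n}. Arguments entry_bound {R d n A}.

Lemma GL_prod (R : realType) d n (Z : mxfun R d n.+1) : torus_smooth_GL Z ->
  1 <= C0norm Z * C0norm (mxinvf Z).
Proof.
move=> [[hp hs] hu].
have hc : forall i j, cc (fun x => Z x i j).
  by move=> i j; have [h1 [h2 _]] := hs [::] i j.
have hpi : Defs.periodic (R:=R) (mxinvf Z) by move=> k x; rewrite /mxinvf hp.
have hci := cc_invmx hu hc.
apply: (le_trans (opnorm_inv _ (hu 0))).
apply: ler_pM; rewrite ?opnorm_ge0 //.
  exact: C0_ge.
exact: (C0_ge hpi hci).
Qed.


Arguments GL_prod {R d n Z}.
Section Cr.
Variables (R : realType) (d n : nat).
Implicit Types (A : mxfun R d n).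

Lemma pmap_some (s : seq 'I_d) k : pmap id (map Some s ++ nseq k None) = s.
Proof.
rewrite pmap_cat; elim: s => [|a s ih] /=.
  by elim: k => //.
by rewrite ih.
Qed.

Lemma Cr_has_ub A r :
  has_ubound [set C0norm (dpart s A) | s in [set s : seq 'I_d | (size s <= r)%N]].
Proof.
exists (\sum_(t : r.-tuple (option 'I_d)) C0norm (dpart (pmap id (tval t)) A)).
move=> _ [s hs <-].
have ht : size (map Some s ++ nseq (r - size s) None) == r.
  by rewrite size_cat size_map size_nseq subnKC.
pose t := Tuple ht.
have -> : s = pmap id (tval t) by rewrite /= pmap_some.
rewrite (bigD1 t) //= lerDl; apply: sumr_ge0 => ? _; exact: C0_ge0.
Qed.

Lemma Cr_ge0 A r : 0 <= Crnorm r A.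
Proof. by apply: sup_ge0 => _ [s _ <-]; exact: C0_ge0. Qed.

Lemma Cr_ge_C0 A r : C0norm A <= Crnorm r A.
Proof. by apply: ub_le_sup; [exact: Cr_has_ub | exists [::]]. Qed.

Lemma Cr_mono A r m : (r <= m)%N -> Crnorm r A <= Crnorm m A.
Proof.
move=> hrm; apply: ge_sup; first by exists (C0norm (dpart [::] A)), [::].
move=> _ [s hs <-]; apply: ub_le_sup; first exact: Cr_has_ub.
by exists s => //; apply: leq_trans hrm.
Qed.
End Cr.
Arguments Cr_ge0 {R d n}. Arguments Cr_ge_C0 {R d n}. Arguments Cr_mono {R d n}.

Lemma Cr_n0 (R : realType) d (F : mxfun R d 0) r : Crnorm r F = 0.
Proof.
apply/eqP; rewrite eq_le Cr_ge0 andbT; apply: ge_sup.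
  by exists (C0norm (dpart [::] F)), [::].
move=> _ [s _ <-]; apply: ge_sup; first by exists (opnorm (dpart s F 0)), 0.
move=> _ [x _ <-]; apply: ge_sup; first by exists (vnorm (dpart s F x *m 0)), 0 => //; rewrite /= vnorm0 ler01.
by move=> _ [v _ <-]; rewrite /vnorm big_ord0 sqrtr0.
Qed.

Lemma keyF (R : realType) d n (Z F : mxfun R d n) m : torus_smooth_GL Z ->
  Crnorm m F <= Crnorm m Z ^+ m * Crnorm m F + Crnorm m (mxinvf Z) ^+ m * Crnorm m F.
Proof.
case: n Z F => [|n] Z F hZ.
  rewrite (Cr_n0 _ _ F).
  by apply: addr_ge0; apply: mulr_ge0; rewrite ?exprn_ge0 ?Cr_ge0.
have h1 := GL_prod hZ.
have hz := le_trans (C0_ge0 Z) (Cr_ge_C0 Z m).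
have hw := le_trans (C0_ge0 (mxinvf Z)) (Cr_ge_C0 (mxinvf Z) m).
have hf := Cr_ge0 F m.
have h2 : 1 <= Crnorm m Z * Crnorm m (mxinvf Z).
  apply: (le_trans h1); apply: ler_pM; [exact: C0_ge0 | exact: C0_ge0 | exact: Cr_ge_C0 | exact: Cr_ge_C0].
set z := Crnorm m Z in hz h2 *; set w := Crnorm m (mxinvf Z) in hw h2 *.
set f := Crnorm m F in hf *.
clearbody z w f.
have H2 : 0 <= w ^+ m * f := mulr_ge0 (exprn_ge0 m hw) hf.
have H3 : 0 <= z ^+ m * f := mulr_ge0 (exprn_ge0 m hz) hf.
have [z1|z1] := leP 1 z.
  have H := ler_peMl hf (exprn_ege1 m z1).
  apply: (le_trans H); rewrite lerDl; exact: H2.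
have w1 : 1 <= w.
  rewrite leNgt; apply/negP => w1.
  have : z * w < 1.
    apply: (le_lt_trans _ z1); rewrite -[X in _ <= X]mulr1; apply: ler_wpM2l; [exact: hz | exact: ltW].
  by rewrite ltNge h2.
have H := ler_peMl hf (exprn_ege1 m w1).
apply: (le_trans H); rewrite lerDr; exact: H3.
Qed.

Lemma keyB (R : realType) d n (Z F : mxfun R d n) m r k : (r <= m)%N -> (k <= m)%N ->
  Crnorm r Z ^+ k * Crnorm r F <= Crnorm m F + Crnorm m Z ^+ m * Crnorm m F.
Proof.
move=> hr hk.
have hz := Cr_ge0 Z r; have hf := Cr_ge0 F r.
have hzm := Cr_mono Z r m hr; have hfm := Cr_mono F r m hr.
have hzm' : 0 <= Crnorm m Z := le_trans hz hzm.
set zr := Crnorm r Z in hz hzm *; set z := Crnorm m Z in hzm hzm' *.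
set fr := Crnorm r F in hf hfm *; set f := Crnorm m F in hfm *.
clearbody zr z fr f.
have h1 : zr ^+ k <= 1 + z ^+ m.
  have h0 : zr ^+ k <= z ^+ k by apply: lerXn2r; rewrite ?nnegrE.
  apply: (le_trans h0).
  have [z1|z1] := leP z 1.
    apply: (le_trans (exprn_ile1 k hzm' z1)); rewrite lerDl; exact: exprn_ge0.
  apply: (le_trans (ler_weXn2l (ltW z1) hk)); rewrite lerDr; exact: ler01.
have -> : f + z ^+ m * f = (1 + z ^+ m) * f by rewrite mulrDl mul1r.
apply: ler_pM => //; exact: exprn_ge0.
Qed.

Lemma lin (R : realType) (q f A B h : R) :
  q <= f + A -> f <= A + B -> 0 <= B -> A + B <= h / 2 -> q <= h.
Proof. move=> *; lra. Qed.


Arguments keyB {R d n}. Arguments keyF {R d n}. Arguments lin {R}.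

Theorem lemma24 (R : realType) (d n : nat)
  (Z : nat -> nat -> mxfun R d n) (F : nat -> nat -> mxfun R d n) :
  (forall j m', torus_smooth_GL (Z j m')) ->
  (forall j m', torus_smooth (F j m')) ->
  (forall m' : nat,
     (fun j => Crnorm m' (Z j m') ^+ m' * Crnorm m' (F j m')) @ \oo --> 0 /\
     (fun j => Crnorm m' (mxinvf (Z j m')) ^+ m' * Crnorm m' (F j m')) @ \oo --> 0) ->
  exists a b : nat -> nat,
    forall m r : nat,
      (fun j => Crnorm r (Z (a j) (b j)) ^+ m * Crnorm r (F (a j) (b j))) @ \oo --> 0 /\
      (fun j => Crnorm r (mxinvf (Z (a j) (b j))) ^+ m * Crnorm r (F (a j) (b j))) @ \oo --> 0.
Proof.
move=> hZ hF hyp.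
pose G j m' := Crnorm m' (Z j m') ^+ m' * Crnorm m' (F j m') +
               Crnorm m' (mxinvf (Z j m')) ^+ m' * Crnorm m' (F j m').
have hG : forall m', (fun j => G j m') @ \oo --> 0.
  move=> m'; have [h1 h2] := hyp m'.
  have := cvgD h1 h2; rewrite addr0; exact.
have hN : forall J : nat, exists N, G N J <= (J.+1%:R)^-1 / 2.
  move=> J; have e0 : 0 < (J.+1%:R : R)^-1 / 2 by rewrite divr_gt0 // invr_gt0.
  have := cvgr0_norm_le (fun j => G j J) (hG J) _ e0; case=> N _ HN.
  exists N; apply: le_trans (ler_norm _) (HN N _); exact: leqnn.
have [a ha] := choice hN.
exists a, id => m r.
have Hsq : forall q : nat -> R,
    (forall J, (maxn m r <= J)%N -> 0 <= q J /\ q J <= (J.+1%:R)^-1) ->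
    q @ \oo --> 0.
  move=> q hq.
  apply: (@squeeze_cvgr _ _ _ _ (fun=> 0) (fun J : nat => (J.+1%:R)^-1) q).
  - exists (maxn m r) => // J /= hJ; have [h1 h2] := hq J hJ.
    by rewrite h1 h2.
  - exact: cvg_cst.
  - exact: cvg_harmonic.
have hbase : forall J, 0 <= Crnorm J (mxinvf (Z (a J) J)) ^+ J * Crnorm J (F (a J) J)
    /\ 0 <= Crnorm J (Z (a J) J) ^+ J * Crnorm J (F (a J) J).
  by move=> J; split; apply: mulr_ge0; rewrite ?exprn_ge0 ?Cr_ge0.
split; apply: Hsq => J hJ.
  have hr : (r <= J)%N by apply: leq_trans hJ; exact: leq_maxr.
  have hm : (m <= J)%N by apply: leq_trans hJ; exact: leq_maxl.
  split; first by apply: mulr_ge0; rewrite ?exprn_ge0 ?Cr_ge0.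
  have h1 := keyB (Z (a J) J) (F (a J) J) J r m hr hm.
  have h2 := keyF (Z (a J) J) (F (a J) J) J (hZ (a J) J).
  have h3 := proj1 (hbase J).
  have h4 := ha J; rewrite /G in h4.
  exact: (lin _ _ _ _ _ h1 h2 h3 h4).
have hr : (r <= J)%N by apply: leq_trans hJ; exact: leq_maxr.
have hm : (m <= J)%N by apply: leq_trans hJ; exact: leq_maxl.
split; first by apply: mulr_ge0; rewrite ?exprn_ge0 ?Cr_ge0.
have h1 := keyB (mxinvf (Z (a J) J)) (F (a J) J) J r m hr hm.
have h2 := keyF (Z (a J) J) (F (a J) J) J (hZ (a J) J).
have h3 := proj2 (hbase J).
have h4 := ha J.
rewrite /G addrC in h4.
rewrite addrC in h2.
exact: (lin _ _ _ _ _ h1 h2 h3 h4).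
Qed.
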